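(* Let $A\in\mathbb{R}^{m\times m}$ be positive definite, $B\in\mathbb{R}^{m\times n}$ ($n\le m$), $\alpha\ge0$, $\beta>0$, and let $(\lambda,(u^*,v^* )^* )$ be an eigenpair of $\mathcal{P}_{MGSSP}^{-1}\mathcal{A}$ with $u\in\mathbb{C}^m$, $v\in\mathbb{C}^n$ and $B^Tu\neq0$. Set $a_1+ib_1=\frac{u^*Au}{u^*u}$ ($a_1,b_1\in\mathbb{R}$), $c_1=\frac{u^*BB^Tu}{u^*u}$, $a_2=\beta^2(a_1^2-b_1^2)-4\alpha\beta c_1$, $b_2=2\beta^2a_1b_1$, and $$z_1=\sqrt{\tfrac{\sqrt{a_2^2+b_2^2}+a_2}{2}},\qquad z_2=\operatorname{sign}(b_1)\sqrt{\tfrac{\sqrt{a_2^2+b_2^2}-a_2}{2}},$$ so that $(z_1+iz_2)^2=a_2+ib_2$. Let $D=\alpha\beta+2\beta a_1+4c_1+2i\beta b_1$. Then $\lambda$ is one of $$\lambda_+=\frac12+\frac{(z_1-\alpha\beta-\beta a_1)+i(z_2-\beta b_1)}{2D},\qquad \lambda_-=\frac12-\frac{(z_1+\alpha\beta+\beta a_1)+i(z_2+\beta b_1)}{2D},$$ and $$\Big|\lambda_\pm-\frac12\Big|^2\le\frac{(\alpha\beta+2\beta a_1)^2+\big(\beta|b_1|+\sqrt{\beta^2b_1^2+4\alpha\beta c_1}\big)^2}{4\big[(\alpha\beta+2\beta a_1+4c_1)^2+4\beta^2b_1^2\big]}\le\frac{(\alpha\beta+2\beta\rho(H))^2+\big(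\beta\rho(S)+\sqrt{\beta^2\rho(S)^2+4\alpha\beta\rho(BB^T)}\big)^2}{4\big(\alpha\beta+2\beta\lambda_{\min}(H)+4\lambda_{\min}(BB^T)\big)^2}.$$
   Context: A real square matrix $A$ is called positive definite if $x^TAx>0$ for all nonzero $x\in\mathbb{R}^m$ ($A$ need not be symmetric). $H=\frac12(A+A^T)$, $S=\frac12(A-A^T)$. $\mathcal{A}=\begin{pmatrix}A & B\\ -B^T & 0\end{pmatrix}$ and, for $\alpha\ge0,\beta>0$, $\mathcal{P}_{MGSSP}=\begin{pmatrix}\alpha I+2A & 2B\\ -2B^T & \beta I\end{pmatrix}$. $\lambda_{\min}(\cdot)$ is the smallest eigenvalue of a symmetric matrix, $\rho(\cdot)$ the spectral radius, $\operatorname{sign}(b_1)$ the sign of $b_1$ (with $\operatorname{sign}(0)$ taken as $\pm1$ arbitrarily; both choices give $z_2=0$ unless $b_1\neq0$). *)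

(* Defs.v *)
(* Complex numbers: an arbitrary numClosedFieldType C
   (e.g. algC, or the field of complex numbers); real matrices are matrices
   over C whose entries are real (Num.real). *)
From HB Require Import structures.
From mathcomp Require Import all_boot all_order all_algebra.
Set Implicit Arguments. Unset Strict Implicit. Unset Printing Implicit Defensive.
Import Order.TTheory GRing.Theory Num.Theory.
Local Open Scope ring_scope.

Definition ctrmx (C : numClosedFieldType) (p q : nat) (M : 'M[C]_(p, q)) : 'M[C]_(q, p) :=
  (map_mx (fun x => x^*) M)^T.

(* A real square matrix is positive definite if x^T A x > 0 for all nonzero
   real x (A need not be symmetric). *)
Definition posdef (C : numClosedFieldType) (m : nat) (A : 'M[C]_m) : Prop :=
  A \is a mxOver Num.real /\
  forall x : 'cV[C]_m, x \is a mxOver Num.real -> x != 0 -> 0 < (x^T *m A *m x) 0 0.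

Definition is_spectral_radius (C : numClosedFieldType) (m : nat) (M : 'M[C]_m) (r : C) : Prop :=
  (exists2 l, eigenvalue M l & `|l| = r) /\ (forall l, eigenvalue M l -> `|l| <= r).

Definition is_lambda_min (C : numClosedFieldType) (m : nat) (M : 'M[C]_m) (l : C) : Prop :=
  eigenvalue M l /\ (forall k, eigenvalue M k -> l <= k).

Definition saddleA (C : numClosedFieldType) (m n : nat) (A : 'M[C]_m) (B : 'M[C]_(m, n))
  : 'M[C]_(m + n) := block_mx A B (- B^T) 0.

Definition P_MGSSP (C : numClosedFieldType) (m n : nat) (A : 'M[C]_m) (B : 'M[C]_(m, n))
  (alpha beta : C) : 'M[C]_(m + n) :=
  block_mx (alpha%:M + 2%:R *: A) (2%:R *: B) (- (2%:R *: B^T)) (beta%:M).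

(* Main.v *)
Require Import Defs.
From HB Require Import structures.
From mathcomp Require Import all_boot all_order all_algebra.
From mathcomp Require Import spectral sesquilinear.
From mathcomp Require Import ring.
Import Order.TTheory GRing.Theory Num.Theory.
Local Open Scope ring_scope.

Section Aux.
Context {C : numClosedFieldType}.

Lemma ctrmx_mul (p q r : nat) (X : 'M[C]_(p, q)) (Y : 'M[C]_(q, r)) :
  ctrmx (X *m Y) = ctrmx Y *m ctrmx X.
Proof. by rewrite /ctrmx map_mxM trmx_mul. Qed.

Lemma ctrmxK (p q : nat) (X : 'M[C]_(p, q)) : ctrmx (ctrmx X) = X.
Proof. by apply/matrixP=> i j; rewrite !mxE conjCK. Qed.

Lemma ctrmx_real (p q : nat) (X : 'M[C]_(p, q)) :
  X \is a mxOver Num.real -> ctrmx X = X^T.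
Proof. by move=> hX; rewrite /ctrmx realmxC. Qed.

Lemma ctrmxE (p q : nat) (X : 'M[C]_(p, q)) : ctrmx X = (X ^t* )%sesqui.
Proof. by rewrite /ctrmx map_trmx. Qed.

Lemma ctrmx_entry (X : 'M[C]_1) : (ctrmx X) 0 0 = (X 0 0)^*.
Proof. by rewrite !mxE. Qed.

Lemma ctrmxD (p q : nat) (X Y : 'M[C]_(p, q)) : ctrmx (X + Y) = ctrmx X + ctrmx Y.
Proof. by apply/matrixP=> i j; rewrite !mxE rmorphD. Qed.

Lemma ctrmxN (p q : nat) (X : 'M[C]_(p, q)) : ctrmx (- X) = - ctrmx X.
Proof. by apply/matrixP=> i j; rewrite !mxE rmorphN. Qed.

Lemma ctrmxZ (p q : nat) (a : C) (X : 'M[C]_(p, q)) : ctrmx (a *: X) = a^* *: ctrmx X.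
Proof. by apply/matrixP=> i j; rewrite !mxE rmorphM. Qed.

Lemma sqr_ge0R (x : C) : x \is Num.real -> 0 <= x ^+ 2.
Proof. by move=> hx; rewrite -real_normK // exprn_ge0. Qed.

Lemma cdot_gt0 (p : nat) (r : 'cV[C]_p) : r != 0 -> 0 < (ctrmx r *m r) 0 0.
Proof.
move=> hr.
have -> : (ctrmx r *m r) 0 0 = \sum_i `|r i 0| ^+ 2.
  by rewrite mxE; apply: eq_bigr => i _; rewrite !mxE normCK mulrC.
have [j hj] : exists j, r j 0 != 0.
  apply/existsP; move: hr; apply: contraR; rewrite negb_exists => /forallP h.
  by apply/eqP/matrixP => i k; rewrite ord1 mxE; apply/eqP; move: (h i); rewrite negbK.
rewrite (bigD1 j) //=; apply: (@lt_le_trans _ _ (`|r j 0| ^+ 2)).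
  by rewrite exprn_gt0 // normr_gt0.
by rewrite lerDl sumr_ge0 // => i _; rewrite exprn_ge0.
Qed.

Lemma cdot_ge0 (p : nat) (r : 'cV[C]_p) : 0 <= (ctrmx r *m r) 0 0.
Proof.
have [->|hr] := eqVneq r 0; first by rewrite mulmx0 mxE.
exact/ltW/cdot_gt0.
Qed.

End Aux.


Section Aux2.
Context {C : numClosedFieldType}.

Lemma real_entry (p q r : nat) (X : 'M[C]_(p, q)) (Y : 'M[C]_(q, r)) i j :
  X \is a mxOver Num.real -> Y \is a mxOver Num.real -> (X *m Y) i j \is Num.real.
Proof. by move=> hX hY; apply: (mxOverP (mxOverM hX hY)). Qed.

Lemma entryD (X Y : 'M[C]_1) : (X + Y) 0 0 = X 0 0 + Y 0 0.
Proof. by rewrite mxE. Qed.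
Lemma entryB (X Y : 'M[C]_1) : (X - Y) 0 0 = X 0 0 - Y 0 0.
Proof. by rewrite !mxE. Qed.
Lemma entryZ (a : C) (X : 'M[C]_1) : (a *: X) 0 0 = a * X 0 0.
Proof. by rewrite mxE. Qed.

Lemma quad_conj (p : nat) (M : 'M[C]_p) (u : 'cV[C]_p) :
  M \is a mxOver Num.real ->
  ((ctrmx u *m M *m u) 0 0)^* = (ctrmx u *m M^T *m u) 0 0.
Proof.
by move=> hM; rewrite -ctrmx_entry !ctrmx_mul ctrmxK [ctrmx M]ctrmx_real // mulmxA.

Qed.

Lemma ReH (p : nat) (A : 'M[C]_p) (u : 'cV[C]_p) :
  A \is a mxOver Num.real ->
  'Re ((ctrmx u *m A *m u) 0 0) = (ctrmx u *m (2%:R^-1 *: (A + A^T)) *m u) 0 0.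
Proof.
move=> hA; rewrite -scalemxAr -scalemxAl mulmxDr mulmxDl entryZ entryD -quad_conj //.
by rewrite ReE mulrC.
Qed.

Lemma ImS (p : nat) (A : 'M[C]_p) (u : 'cV[C]_p) :
  A \is a mxOver Num.real ->
  'i * 'Im ((ctrmx u *m A *m u) 0 0) = (ctrmx u *m (2%:R^-1 *: (A - A^T)) *m u) 0 0.
Proof.
move=> hA; rewrite -scalemxAr -scalemxAl mulmxBr mulmxBl entryZ entryB -quad_conj //.
rewrite ImE !mulrA -expr2 sqrCi; ring.
Qed.

Lemma posRe (p : nat) (A : 'M[C]_p) (u : 'cV[C]_p) :
  posdef A -> u != 0 -> 0 < 'Re ((ctrmx u *m A *m u) 0 0).
Proof.
move=> [hAr hA] hu.
pose x := map_mx (@Num.Theory.Re C) u; pose y := map_mx (@Num.Theory.Im C) u.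
have xr : x \is a mxOver Num.real by apply/mxOverP => i j; rewrite mxE Creal_Re.
have yr : y \is a mxOver Num.real by apply/mxOverP => i j; rewrite mxE Creal_Im.
have ue : u = x + 'i *: y by apply/matrixP => i j; rewrite !mxE -Crect.
pose f (X Y : 'cV[C]_p) := (X^T *m A *m Y) 0 0.
have fr X Y : X \is a mxOver Num.real -> Y \is a mxOver Num.real -> f X Y \is Num.real.
  move=> hX hY; apply: real_entry => //; apply: mxOverM => //.
  by apply/mxOverP => i j; rewrite mxE (mxOverP hX).
have E : (ctrmx u *m A *m u) 0 0 = (f x x + f y y) + 'i * (f x y - f y x).
  rewrite ue ctrmxD ctrmxZ conjCi !ctrmx_real // .
  rewrite !(mulmxDl, mulmxDr) -!scalemxAl -!scalemxAr.
  rewrite !(entryD, entryZ) -/(f x x) -/(f x y) -/(f y x) -/(f y y).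
  have hi : 'i * 'i = -1 :> C by rewrite -expr2 sqrCi.
  rewrite [- 'i * ('i * _)]mulrA !mulNr hi; ring.
rewrite E Re_rect; last 2 first.
- by apply: realD; apply: fr.
- by apply: realB; apply: fr.
have gx X : X \is a mxOver Num.real -> 0 <= f X X.
  move=> hX; have [->|hX0] := eqVneq X 0; first by rewrite /f mulmx0 mxE.
  exact/ltW/hA.
have [x0|hx0] := eqVneq x 0.
  have hy0 : y != 0.
    apply: contraNneq hu => y0; by rewrite ue x0 y0 scaler0 addr0.
  by rewrite ltr_wpDl ?gx //; apply: hA.
by rewrite ltr_wpDr ?gx //; apply: hA.
Qed.

End Aux2.


Section Aux3.
Context {C : numClosedFieldType}.

Lemma herm_of_ct (p : nat) (M : 'M[C]_p) : ctrmx M = M -> M \is hermsymmx.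
Proof. by move=> h; apply/is_hermitianmxP; rewrite expr0 scale1r -ctrmxE h. Qed.

Lemma normal_of_ct (p : nat) (M : 'M[C]_p) (s : C) : s ^+ 2 = 1 -> ctrmx M = s *: M -> M \is normalmx.
Proof.
move=> hs h; apply/normalmxP; rewrite -ctrmxE h.
by rewrite -scalemxAl -scalemxAr.
Qed.

Lemma rayleigh (p : nat) (M : 'M[C]_p) (u : 'cV[C]_p) :
  M \is normalmx ->
  exists w : 'cV[C]_p, exists d : 'rV[C]_p,
   [/\ (ctrmx u *m M *m u) 0 0 = \sum_i `|w i 0| ^+ 2 * d 0 i,
       (ctrmx u *m u) 0 0 = \sum_i `|w i 0| ^+ 2,
       (forall i, eigenvalue M (d 0 i)) &
       (M \is hermsymmx -> forall i, d 0 i \is Num.real)].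
Proof.
move=> hN.
pose P := spectralmx M; pose d := spectral_diag M.
have Pu : P \is unitarymx := spectral_unitarymx M.
have Punit : P \in unitmx := spectral_unit M.
have hM : M = invmx P *m diag_mx d *m P by apply/orthomx_spectralP.
have iP : invmx P = ctrmx P by rewrite invmx_unitary // ctrmxE.
have PP : ctrmx P *m P = 1%:M by apply: mulmx1C; rewrite ctrmxE; apply/unitarymxP.
exists (P *m u), d; split.
- rewrite hM iP -!mulmxA mulmxA -ctrmx_mul mulmxA mxE.
  apply: eq_bigr => j _; rewrite mul_mx_diag !mxE normCK; ring.
- have -> : ctrmx u *m u = ctrmx (P *m u) *m (P *m u).
    by rewrite ctrmx_mul mulmxA -(mulmxA (ctrmx u)) PP mulmx1.
  rewrite mxE; apply: eq_bigr => j _; rewrite !mxE normCK mulrC.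
  done.
- move=> i; apply/eigenvalueP; exists ('e_i *m P).
    rewrite [in X in _ *m X]hM !mulmxA mulmxK //.
    by rewrite -[_ *m diag_mx d]rowE row_diag_mx scalemxAl.
  apply/eqP => h0.
  move: (congr1 (mulmx^~ (invmx P)) h0) => /=.
  rewrite mulmxK // mul0mx => /matrixP /(_ 0 i); rewrite !mxE !eqxx /= => /eqP.
  by rewrite oner_eq0.
- by move=> hH i; apply: (mxOverP (hermitian_spectral_diag_real hH)).
Qed.

End Aux3.


Section Aux4.
Context {C : numClosedFieldType}.

Lemma entry_real_ge0 (x : C) : 0 <= x -> 'Re x = x.
Proof. by move=> hx; apply/Creal_ReP; apply: ger0_real. Qed.

Lemma entryN (X : 'M[C]_1) : (- X) 0 0 = - X 0 0.
Proof. by rewrite mxE. Qed.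

Lemma P_unit (m n : nat) (A : 'M[C]_m) (B : 'M[C]_(m, n)) (alpha beta : C) :
  posdef A -> B \is a mxOver Num.real -> 0 <= alpha -> 0 < beta ->
  P_MGSSP A B alpha beta \in unitmx.
Proof.
move=> hA hB ha hb; rewrite unitmxE unitfE; apply/negP => /det0P [w hw0].
rewrite -(hsubmxK w) /P_MGSSP mul_row_block -row_mx0 => /eq_row_mx [E1 E2].
move: hw0; rewrite -(hsubmxK w).
move: (lsubmx w) (rsubmx w) E1 E2 => v1 v2 E1 E2 hw0.
pose c := ctrmx v1.
have v1E : v1 = ctrmx c by rewrite ctrmxK.
pose r := B^T *m c.
have rE : v1 *m B = ctrmx r by rewrite ctrmx_mul [ctrmx B^T]ctrmx_real ?trmxK -?v1E //;
  apply/mxOverP => i j; rewrite mxE (mxOverP hB).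
have e1 : ((v1 *m (alpha%:M + 2%:R *: A) + v2 *m - (2%:R *: B^T)) *m c) 0 0 = 0.
  by rewrite E1 mul0mx mxE.
have e2 : ((v1 *m (2%:R *: B) + v2 *m beta%:M) *m r) 0 0 = 0.
  by rewrite E2 mul0mx mxE.
rewrite !(mulmxDl, mulmxDr, mulmxN, mulNmx, mul_mx_scalar) -!scalemxAl -!scalemxAr in e1 e2.
rewrite -?scalemxAl -?scalemxAr -?scalemxAl in e1 e2.
rewrite -?scalemxAl -?scalemxAr -?scalemxAl in e2.
rewrite !(entryD, entryB, entryZ) in e1 e2.
rewrite entryN entryZ -[v2 *m B^T *m c]mulmxA -/r v1E in e1.
rewrite rE in e2.
have [c0|cn0] := eqVneq c 0.
  move: E2; rewrite v1E c0 /ctrmx map_mx0 trmx0 mul0mx add0r mul_mx_scalar => /eqP.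
  rewrite scaler_eq0 (gt_eqF hb) /= => /eqP v20.
  by move: hw0; rewrite v1E c0 v20 /ctrmx map_mx0 trmx0 row_mx0 eqxx.
set cc := (ctrmx c *m c) 0 0 in e1 e2.
set qc := (ctrmx c *m A *m c) 0 0 in e1 e2.
set t := (v2 *m r) 0 0 in e1 e2.
set g := (ctrmx r *m r) 0 0 in e1 e2.
have S : beta * alpha * cc + 2%:R * beta * qc + 4%:R * g = 0.
  transitivity (beta * (alpha * cc + 2%:R * qc + - (2%:R * t)) + 2%:R * (2%:R * g + beta * t)); first ring.
  by rewrite e1 e2; ring.
have ccr : 0 <= cc by apply: cdot_ge0.
have gr : 0 <= g by apply: cdot_ge0.
have qp : 0 < 'Re qc by apply: posRe.
have := congr1 (@Num.Theory.Re C) S.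
rewrite raddf0 !raddfD /= !ReMl; first last.
1-3: by rewrite ger0_real // ?mulr_ge0 ?(ltW hb) ?ler0n.
rewrite (entry_real_ge0 _ ccr) (entry_real_ge0 _ gr).
move=> /eqP; apply/negP; rewrite gt_eqF //.
apply: ltr_wpDr; first by rewrite mulr_ge0 ?ler0n.
apply: ltr_wpDl; first by rewrite !mulr_ge0 ?(ltW hb).
by rewrite !mulr_gt0 // ltr0n.
Qed.

End Aux4.


Section Aux5.
Context {C : numClosedFieldType}.

Lemma eig_quad (m n : nat) (A : 'M[C]_m) (B : 'M[C]_(m, n)) (alpha beta lam : C)
  (u : 'cV[C]_m) (v : 'cV[C]_n) :
  P_MGSSP A B alpha beta \in unitmx ->
  invmx (P_MGSSP A B alpha beta) *m saddleA A B *m col_mx u v = lam *: col_mx u v ->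
  beta * (alpha * (ctrmx u *m u) 0 0 + 2%:R * (ctrmx u *m A *m u) 0 0) * lam ^+ 2
  - beta * (ctrmx u *m A *m u) 0 0 * lam
  + (2%:R * lam - 1) ^+ 2 * (ctrmx u *m B *m B^T *m u) 0 0 = 0.
Proof.
move=> hP heig.
have E : saddleA A B *m col_mx u v = lam *: (P_MGSSP A B alpha beta *m col_mx u v).
  by rewrite scalemxAr -heig -[invmx _ *m _ *m _]mulmxA mulKVmx.
move: E; rewrite /saddleA /P_MGSSP !mul_block_col scale_col_mx => /eq_col_mx [E1 E2].
have e1 := congr1 (fun X => (ctrmx u *m X) 0 0) E1.
have e2 := congr1 (fun X => (ctrmx u *m B *m X) 0 0) E2.
cbv beta in e1, e2.
do 3 (rewrite ?(mulmxDl, mulmxDr, mulmxN, mulNmx, mul_scalar_mx, mul0mx, mulmx0, addr0) in e1 e2;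
  rewrite -?scalemxAl -?scalemxAr in e1 e2; rewrite -?scalemxAl -?scalemxAr in e1 e2).
rewrite ?(entryD, entryN, entryZ, mulmxA) in e1 e2.
move: e1 e2.
set uu := (ctrmx u *m u) 0 0; set qA := (ctrmx u *m A *m u) 0 0.
set s := (ctrmx u *m B *m v) 0 0; set cc := (ctrmx u *m B *m B^T *m u) 0 0.
move=> e1 e2.
have f1 : qA + s - lam * (alpha * uu + 2%:R * qA + 2%:R * s) = 0 by rewrite e1 subrr.
have f2 : - cc - lam * (- (2%:R * cc) + beta * s) = 0 by rewrite [X in X - _]e2 subrr.
transitivity (- (beta * lam) * (qA + s - lam * (alpha * uu + 2%:R * qA + 2%:R * s))
   - (1 - 2%:R * lam) * (- cc - lam * (- (2%:R * cc) + beta * s))); first ring.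
by rewrite f1 f2; ring.
Qed.
End Aux5.


Section Aux6.
Context {C : numClosedFieldType}.

Lemma sqrtC_sqr_real (x : C) : x \is Num.real -> sqrtC (x ^+ 2) = `|x|.
Proof. by move=> hx; rewrite -real_normK // sqrCK. Qed.

Lemma sq_le (x y : C) : x \is Num.real -> `|x| <= y -> x ^+ 2 <= y ^+ 2.
Proof.
move=> hx hxy; rewrite -real_normK //; apply: lerXn2r; rewrite ?nnegrE //.
exact: le_trans (normr_ge0 _) hxy.
Qed.

Lemma sq_le0 (x y : C) : 0 <= x -> x <= y -> x ^+ 2 <= y ^+ 2.
Proof. by move=> hx hxy; apply: lerXn2r; rewrite ?nnegrE // (le_trans hx hxy). Qed.

Lemma XY (alpha beta a1 b1 c1 rH rS rBB lH lBB : C) :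
  0 <= alpha -> 0 < beta -> b1 \is Num.real -> 0 < lH -> lH <= a1 -> a1 <= rH ->
  `|b1| <= rS -> 0 <= lBB -> lBB <= c1 -> c1 <= rBB ->
  ((alpha * beta + 2%:R * beta * a1) ^+ 2
            + (beta * `|b1| + sqrtC (beta ^+ 2 * b1 ^+ 2 + 4%:R * alpha * beta * c1)) ^+ 2)
           / (4%:R * ((alpha * beta + 2%:R * beta * a1 + 4%:R * c1) ^+ 2
                      + 4%:R * beta ^+ 2 * b1 ^+ 2))
  <= ((alpha * beta + 2%:R * beta * rH) ^+ 2
            + (beta * rS + sqrtC (beta ^+ 2 * rS ^+ 2 + 4%:R * alpha * beta * rBB)) ^+ 2)
           / (4%:R * (alpha * beta + 2%:R * beta * lH + 4%:R * lBB) ^+ 2).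
Proof.
move=> ha hb hb1 hlH hla hau hbs hlB hlc hcu.
have hb0 := ltW hb.
have ha1 : 0 <= a1 := le_trans (ltW hlH) hla.
have hc1 : 0 <= c1 := le_trans hlB hlc.
have hab : 0 <= alpha * beta by rewrite mulr_ge0.
have h4ab : 0 <= 4%:R * alpha * beta by rewrite !mulr_ge0 ?ler0n.
have hP1 : 0 <= alpha * beta + 2%:R * beta * a1 by rewrite addr_ge0 // !mulr_ge0 ?ler0n.
have hk1 : 0 <= beta ^+ 2 * b1 ^+ 2 + 4%:R * alpha * beta * c1.
  apply: addr_ge0; first by apply: mulr_ge0; [apply: exprn_ge0 | apply: sqr_ge0R].
  by rewrite !mulr_ge0 ?ler0n.
have hbr : `|b1| ^+ 2 <= rS ^+ 2 by apply: sq_le0.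
have hk2 : beta ^+ 2 * b1 ^+ 2 + 4%:R * alpha * beta * c1 <=
           beta ^+ 2 * rS ^+ 2 + 4%:R * alpha * beta * rBB.
  apply: lerD; apply: ler_wpM2l => //; first by rewrite exprn_ge0.
  by rewrite -real_normK.
have hQ1 : 0 <= beta * `|b1| + sqrtC (beta ^+ 2 * b1 ^+ 2 + 4%:R * alpha * beta * c1).
  by rewrite addr_ge0 ?mulr_ge0 ?sqrtC_ge0.
have hN1 : 0 <= (alpha * beta + 2%:R * beta * a1) ^+ 2
            + (beta * `|b1| + sqrtC (beta ^+ 2 * b1 ^+ 2 + 4%:R * alpha * beta * c1)) ^+ 2.
  by rewrite addr_ge0 ?exprn_ge0.
have hE2 : 0 < alpha * beta + 2%:R * beta * lH + 4%:R * lBB.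
  by rewrite ltr_wpDr ?mulr_ge0 ?ler0n // ltr_wpDl // !mulr_gt0 // ltr0n.
have hE : alpha * beta + 2%:R * beta * lH + 4%:R * lBB <= alpha * beta + 2%:R * beta * a1 + 4%:R * c1.
  apply: lerD; first apply: lerD => //.
    by apply: ler_wpM2l => //; rewrite mulr_ge0 ?ler0n.
  by apply: ler_wpM2l => //; rewrite ler0n.
have hD2 : 0 < 4%:R * (alpha * beta + 2%:R * beta * lH + 4%:R * lBB) ^+ 2.
  by rewrite mulr_gt0 ?ltr0n // exprn_gt0.
have hDle : 4%:R * (alpha * beta + 2%:R * beta * lH + 4%:R * lBB) ^+ 2 <=
   4%:R * ((alpha * beta + 2%:R * beta * a1 + 4%:R * c1) ^+ 2 + 4%:R * beta ^+ 2 * b1 ^+ 2).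
  apply: ler_wpM2l; first by rewrite ler0n.
  rewrite (le_trans (sq_le0 _ _ (ltW hE2) hE)) // lerDl.
  apply: mulr_ge0; last exact: sqr_ge0R.
  by apply: mulr_ge0; [rewrite ler0n | apply: exprn_ge0].
have hD1 := lt_le_trans hD2 hDle.
apply: ler_pM => //; first by rewrite invr_ge0 ltW.
- apply: lerD.
    apply: sq_le0 => //; apply: lerD => //; apply: ler_wpM2l => //.
    by rewrite mulr_ge0 ?ler0n.
  apply: sq_le0 => //; apply: lerD; first exact: ler_wpM2l.
  by rewrite ler_sqrtC // nnegrE (le_trans hk1 hk2).
- by rewrite lef_pV2 ?posrE.
Qed.

End Aux6.


Section Aux7.
Context {C : numClosedFieldType}.

Lemma alg_part (alpha beta lam a1 b1 c1 sgn : C) :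
  0 <= alpha -> 0 < beta -> 0 < a1 -> b1 \is Num.real -> 0 < c1 ->
  (sgn = 1 \/ sgn = -1) -> (b1 != 0 -> sgn = Num.sg b1) ->
  beta * (alpha + 2%:R * (a1 + 'i * b1)) * lam ^+ 2 - beta * (a1 + 'i * b1) * lam
    + (2%:R * lam - 1) ^+ 2 * c1 = 0 ->
  let a2 := beta ^+ 2 * (a1 ^+ 2 - b1 ^+ 2) - 4%:R * alpha * beta * c1 in
  let b2 := 2%:R * beta ^+ 2 * a1 * b1 in
  let z1 := sqrtC ((sqrtC (a2 ^+ 2 + b2 ^+ 2) + a2) / 2%:R) in
  let z2 := sgn * sqrtC ((sqrtC (a2 ^+ 2 + b2 ^+ 2) - a2) / 2%:R) in
  let D := alpha * beta + 2%:R * beta * a1 + 4%:R * c1 + 2%:R * 'i * beta * b1 in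
  let lamp := 2%:R^-1 + ((z1 - alpha * beta - beta * a1) + 'i * (z2 - beta * b1)) / (2%:R * D) in
  let lamm := 2%:R^-1 - ((z1 + alpha * beta + beta * a1) + 'i * (z2 + beta * b1)) / (2%:R * D) in
  let X := ((alpha * beta + 2%:R * beta * a1) ^+ 2
            + (beta * `|b1| + sqrtC (beta ^+ 2 * b1 ^+ 2 + 4%:R * alpha * beta * c1)) ^+ 2)
           / (4%:R * ((alpha * beta + 2%:R * beta * a1 + 4%:R * c1) ^+ 2
                      + 4%:R * beta ^+ 2 * b1 ^+ 2)) in
  (lam = lamp \/ lam = lamm) /\
  `|lamp - 2%:R^-1| ^+ 2 <= X /\ `|lamm - 2%:R^-1| ^+ 2 <= X.
Proof.
move=> ha hb ha1 hb1 hc1 hsgn hsgnb Quad a2 b2 z1 z2 D lamp lamm X.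
have hb0 := ltW hb; have ha10 := ltW ha1; have hc10 := ltW hc1.
have ar := ger0_real ha; have br := gtr0_real hb; have a1r := gtr0_real ha1.
have c1r := gtr0_real hc1.
have h2 : (2%:R : C) != 0 by rewrite pnatr_eq0.
have hk : 0 <= 4%:R * alpha * beta * c1 by rewrite !mulr_ge0 ?ler0n.
have a2r : a2 \is Num.real.
  by rewrite /a2; repeat first [ apply: rpredB | apply: rpredM | apply: rpredX | apply: rpred_nat | done ].
have b2r : b2 \is Num.real.
  by rewrite /b2; repeat first [ apply: rpredB | apply: rpredM | apply: rpredX | apply: rpred_nat | done ].
pose s := sqrtC (a2 ^+ 2 + b2 ^+ 2).
have hab2 : 0 <= a2 ^+ 2 + b2 ^+ 2 by rewrite addr_ge0 ?sqr_ge0R.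
have hs0 : 0 <= s by rewrite sqrtC_ge0.
have hs2 : s ^+ 2 = a2 ^+ 2 + b2 ^+ 2 by rewrite sqrtCK.
have hsa : `|a2| <= s.
  rewrite -sqrtC_sqr_real // ler_sqrtC ?nnegrE ?sqr_ge0R // lerDl sqr_ge0R //.
pose T := beta ^+ 2 * (a1 ^+ 2 + b1 ^+ 2) + 4%:R * alpha * beta * c1.
have hT : 0 <= T.
  apply: addr_ge0 => //; apply: mulr_ge0; first exact: exprn_ge0.
  by apply: addr_ge0; apply: sqr_ge0R.
have hsT : s <= T.
  rewrite -(sqrCK hT) ler_sqrtC ?nnegrE ?exprn_ge0 //.
  rewrite -subr_ge0 (_ : T ^+ 2 - (a2 ^+ 2 + b2 ^+ 2) =
     4%:R * (4%:R * alpha * beta * c1) * (beta ^+ 2 * a1 ^+ 2)); last first.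
    by rewrite /T /a2 /b2; ring.
  by rewrite !mulr_ge0 ?ler0n ?exprn_ge0.
have [hsa1 hsa2] : -s <= a2 /\ a2 <= s.
  by move: hsa; rewrite real_ler_norml // => /andP.
have hpa : 0 <= (s + a2) / 2%:R.
  by rewrite divr_ge0 ?ler0n // (_ : s + a2 = a2 - - s) ?subr_ge0 //; ring.
have hma : 0 <= (s - a2) / 2%:R by rewrite divr_ge0 ?ler0n // subr_ge0.
have z1E : z1 = sqrtC ((s + a2) / 2%:R) by [].
have z2E : z2 = sgn * sqrtC ((s - a2) / 2%:R) by [].
have hz1 : 0 <= z1 by rewrite z1E sqrtC_ge0.
have hz1b : z1 <= beta * a1.
  have hba : 0 <= beta * a1 by rewrite mulr_ge0.
  rewrite z1E -(sqrCK hba) ler_sqrtC ?nnegrE ?exprn_ge0 //.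
  rewrite -subr_ge0 (_ : (beta * a1) ^+ 2 - (s + a2) / 2%:R = (T - s) / 2%:R).
    by rewrite divr_ge0 ?ler0n // subr_ge0.
  by rewrite /T /a2; field.
have sgnr : sgn \is Num.real by case: hsgn => ->; rewrite ?rpredN rpred1.
have nsgn : `|sgn| = 1 by case: hsgn => ->; rewrite ?normrN normr1.
have hz2 : `|z2| <= sqrtC (beta ^+ 2 * b1 ^+ 2 + 4%:R * alpha * beta * c1).
  rewrite z2E normrM nsgn mul1r ger0_norm ?sqrtC_ge0 //.
  rewrite ler_sqrtC ?nnegrE //; last first.
    apply: addr_ge0 => //; apply: mulr_ge0; [exact: exprn_ge0 | exact: sqr_ge0R].
  rewrite -subr_ge0 (_ : beta ^+ 2 * b1 ^+ 2 + 4%:R * alpha * beta * c1 - (s - a2) / 2%:R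
     = (T - s) / 2%:R).
    by rewrite divr_ge0 ?ler0n // subr_ge0.
  by rewrite /T /a2; field.
have z1r : z1 \is Num.real := ger0_real hz1.
have z2r : z2 \is Num.real by rewrite z2E rpredM // ger0_real ?sqrtC_ge0.
have hz : (z1 + 'i * z2) ^+ 2 = a2 + 'i * b2.
  have e1 : z1 ^+ 2 = (s + a2) / 2%:R by rewrite z1E sqrtCK.
  have e2 : z2 ^+ 2 = (s - a2) / 2%:R.
    by rewrite z2E exprMn sqrtCK; case: hsgn => ->; rewrite ?sqrrN expr1n mul1r.
  have e3 : 2%:R * (z1 * z2) = b2.
    have hm : (s + a2) / 2%:R * ((s - a2) / 2%:R) = (b2 / 2%:R) ^+ 2.
      rewrite (_ : (s + a2) / 2%:R * ((s - a2) / 2%:R) = (s ^+ 2 - a2 ^+ 2) / 4%:R).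
        by rewrite hs2; field.
      by field.
    rewrite z1E z2E [sqrtC _ * (sgn * _)]mulrCA -sqrtCM ?nnegrE // hm sqrtC_sqr_real; last first.
      by rewrite rpredM // rpredV rpred_nat.
    rewrite normf_div normr_nat.
    have [b10|b1n0] := eqVneq b1 0.
      by rewrite /b2 b10 mulr0 normr0; field.
    rewrite (hsgnb b1n0) (_ : b2 = (2%:R * beta ^+ 2 * a1) * b1); last by rewrite /b2.
    rewrite normrM gtr0_norm; last by rewrite !mulr_gt0 ?exprn_gt0 ?ltr0n.
    by rewrite {3}(realEsg hb1); field.
  rewrite (_ : (z1 + 'i * z2) ^+ 2 = z1 ^+ 2 + 'i ^+ 2 * z2 ^+ 2 + 'i * (2%:R * (z1 * z2))).
    by rewrite sqrCi e1 e2 e3; field.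
  by ring.
pose R := alpha * beta + 2%:R * beta * a1 + 4%:R * c1.
have hR : 0 < R.
  rewrite /R; apply: ltr_wpDl; first by rewrite addr_ge0 ?mulr_ge0 ?ler0n.
  by rewrite mulr_gt0 ?ltr0n.
have Rr : R \is Num.real := gtr0_real hR.
have Ir : 2%:R * beta * b1 \is Num.real by rewrite !rpredM ?rpred_nat.
have hDE : D = R + 'i * (2%:R * beta * b1) by rewrite /D /R; ring.
have hD : D != 0.
  apply/eqP => h0; have := congr1 (@Num.Theory.Re C) h0.
  by rewrite hDE Re_rect // raddf0; apply/eqP; rewrite gt_eqF.
pose sq := sqrtC (beta ^+ 2 * b1 ^+ 2 + 4%:R * alpha * beta * c1).
have den : `|2%:R * D| ^+ 2 = 4%:R * ((alpha * beta + 2%:R * beta * a1 + 4%:R * c1) ^+ 2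
                      + 4%:R * beta ^+ 2 * b1 ^+ 2).
  by rewrite normrM normr_nat exprMn hDE normC2_rect // /R; ring.
have hP : 0 <= alpha * beta + beta * a1 by rewrite addr_ge0 ?mulr_ge0.
have bnd : forall x y, x \is Num.real -> y \is Num.real ->
    `|x| <= alpha * beta + 2%:R * beta * a1 -> `|y| <= beta * `|b1| + sq ->
    `|(x + 'i * y) / (2%:R * D)| ^+ 2 <= X.
  move=> x y xr yr hx hy; rewrite normf_div expr_div_n den normC2_rect // /X.
  apply: ler_wpM2r.
    rewrite invr_ge0; apply: mulr_ge0; first by rewrite ler0n.
    apply: addr_ge0; first exact: sqr_ge0R.
    apply: mulr_ge0; last exact: sqr_ge0R.
    by apply: mulr_ge0; [rewrite ler0n | apply: exprn_ge0].
  by apply: lerD; apply: sq_le.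
have hy : forall e : C, `|e| = 1 -> `|z2 + e * (beta * b1)| <= beta * `|b1| + sq.
  move=> e he; apply: le_trans (ler_normD _ _) _.
  rewrite [`|e * _|]normrM he mul1r [`|beta * _|]normrM (gtr0_norm hb) addrC lerD2l //.
have hbb : beta * b1 \is Num.real by rewrite rpredM.
have hxp : `|z1 - alpha * beta - beta * a1| <= alpha * beta + 2%:R * beta * a1.
  rewrite (_ : z1 - alpha * beta - beta * a1 = z1 - (alpha * beta + beta * a1)); last by ring.
  apply: le_trans (ler_normB _ _) _; rewrite !ger0_norm //.
  rewrite (_ : alpha * beta + 2%:R * beta * a1 = beta * a1 + (alpha * beta + beta * a1)); last by ring.
  by rewrite lerD2r.
have hxm : `|z1 + alpha * beta + beta * a1| <= alpha * beta + 2%:R * beta * a1.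
  rewrite (_ : z1 + alpha * beta + beta * a1 = z1 + (alpha * beta + beta * a1)); last by ring.
  rewrite ger0_norm; last by rewrite !addr_ge0 ?mulr_ge0.
  rewrite (_ : alpha * beta + 2%:R * beta * a1 = beta * a1 + (alpha * beta + beta * a1)); last by ring.
  by rewrite lerD2r.
have B1 : `|lamp - 2%:R^-1| ^+ 2 <= X.
  rewrite (_ : lamp - 2%:R^-1 = ((z1 - alpha * beta - beta * a1) + 'i * (z2 - beta * b1)) / (2%:R * D)); last first.
    by rewrite /lamp; ring.
  apply: (bnd).
  - by rewrite !rpredB // rpredM.
  - by rewrite rpredB.
  - exact: (hxp).
  - by rewrite -[z2 - _]/(z2 + - (beta * b1)) -mulN1r hy // normrN normr1.
have B2 : `|lamm - 2%:R^-1| ^+ 2 <= X.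
  rewrite (_ : lamm - 2%:R^-1 = - (((z1 + alpha * beta + beta * a1) + 'i * (z2 + beta * b1)) / (2%:R * D))); last first.
    by rewrite /lamm; ring.
  rewrite normrN; apply: (bnd).
  - by rewrite !rpredD // rpredM.
  - by rewrite rpredD.
  - exact: (hxm).
  - by rewrite -[beta * b1]mul1r hy // normr1.
pose Z := D * (2%:R * lam - 1) + alpha * beta + beta * (a1 + 'i * b1).
have hZ : Z ^+ 2 = a2 + 'i * b2.
  transitivity (beta ^+ 2 * (a1 + 'i * b1) ^+ 2 - 4%:R * alpha * beta * c1
     + 4%:R * D * (beta * (alpha + 2%:R * (a1 + 'i * b1)) * lam ^+ 2
        - beta * (a1 + 'i * b1) * lam + (2%:R * lam - 1) ^+ 2 * c1)).
    by rewrite /Z /D; ring.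
  rewrite Quad mulr0 addr0.
  rewrite (_ : (a1 + 'i * b1) ^+ 2 = a1 ^+ 2 + 'i ^+ 2 * b1 ^+ 2 + 'i * (2%:R * a1 * b1)); last by ring.
  by rewrite sqrCi /a2 /b2; ring.
have [hZz|hZz] : Z = z1 + 'i * z2 \/ Z = - (z1 + 'i * z2).
  by have := eqf_sqr Z (z1 + 'i * z2); rewrite hZ hz eqxx => /esym/orP [/eqP|/eqP]; [left|right].
- split.
  + left; rewrite /lamp.
    rewrite (_ : z1 - alpha * beta - beta * a1 + 'i * (z2 - beta * b1) = D * (2%:R * lam - 1)).
      by field.
    transitivity (z1 + 'i * z2 - alpha * beta - beta * (a1 + 'i * b1)); first by ring.
    by rewrite -hZz /Z; ring.
  by split.
- split.
  + right; rewrite /lamm.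
    rewrite (_ : z1 + alpha * beta + beta * a1 + 'i * (z2 + beta * b1) = - (D * (2%:R * lam - 1))).
      by field.
    transitivity (z1 + 'i * z2 + alpha * beta + beta * (a1 + 'i * b1)); first by ring.
    by rewrite -[z1 + 'i * z2]opprK -hZz /Z; ring.
  by split.
Qed.

End Aux7.


Arguments ctrmxK {C p q}.
Arguments ctrmx_real {C p q X}.
Lemma trmx_real {C : numClosedFieldType} (p q : nat) (X : 'M[C]_(p, q)) :
  X \is a mxOver Num.real -> X^T \is a mxOver Num.real.
Proof. by move=> hX; apply/mxOverP => i j; rewrite mxE (mxOverP hX). Qed.
Arguments trmx_real {C p q X}.
Section Aux8.
Context {C : numClosedFieldType}.


Lemma eig_rq (p : nat) (M : 'M[C]_p) (l : C) : eigenvalue M l ->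
  exists c : 'cV[C]_p, c != 0 /\ (ctrmx c *m M *m c) 0 0 = l * (ctrmx c *m c) 0 0.
Proof.
move=> /eigenvalueP [e he en0]; exists (ctrmx e); split.
  apply: contraNneq en0 => h; by rewrite -(ctrmxK e) h /ctrmx map_mx0 trmx0.
by rewrite ctrmxK he -scalemxAl entryZ.
Qed.

Lemma half_real : (2%:R^-1 : C) \is Num.real.
Proof. by rewrite rpredV rpred_nat. Qed.

Lemma ctH (p : nat) (A : 'M[C]_p) : A \is a mxOver Num.real ->
  ctrmx (2%:R^-1 *: (A + A^T)) = 2%:R^-1 *: (A + A^T).
Proof.
move=> hA; rewrite ctrmxZ ctrmxD (ctrmx_real hA) (ctrmx_real (trmx_real hA)) trmxK.
by rewrite (CrealP half_real) addrC.
Qed.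

Lemma ctS (p : nat) (A : 'M[C]_p) : A \is a mxOver Num.real ->
  ctrmx (2%:R^-1 *: (A - A^T)) = -1 *: (2%:R^-1 *: (A - A^T)).
Proof.
move=> hA; rewrite ctrmxZ ctrmxD ctrmxN (ctrmx_real hA) (ctrmx_real (trmx_real hA)) trmxK.
rewrite (CrealP half_real) scaleN1r -scalerN; congr (_ *: _).
by rewrite opprB addrC.
Qed.

Lemma ctBB (m n : nat) (B : 'M[C]_(m, n)) : B \is a mxOver Num.real ->
  ctrmx (B *m B^T) = B *m B^T.
Proof.
by move=> hB; rewrite ctrmx_mul (ctrmx_real hB) (ctrmx_real (trmx_real hB)) trmxK.
Qed.

End Aux8.


Arguments cdot_gt0 {C p r}.
Arguments posRe {C p A u}.
Arguments cdot_ge0 {C p}.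

Theorem theorem5p1 (C : numClosedFieldType) (m n : nat)
  (A : 'M[C]_m) (B : 'M[C]_(m, n)) (alpha beta : C)
  (hA : posdef A) (hB : B \is a mxOver Num.real) (hnm : (n <= m)%N)
  (halpha : 0 <= alpha) (hbeta : 0 < beta)
  (lam : C) (u : 'cV[C]_m) (v : 'cV[C]_n)
  (hw : col_mx u v != 0)
  (heig : invmx (P_MGSSP A B alpha beta) *m saddleA A B *m col_mx u v = lam *: col_mx u v)
  (hBu : B^T *m u != 0)
  (rH rS rBB lH lBB : C)
  (hrH : is_spectral_radius (2%:R^-1 *: (A + A^T)) rH)
  (hrS : is_spectral_radius (2%:R^-1 *: (A - A^T)) rS)
  (hrBB : is_spectral_radius (B *m B^T) rBB)
  (hlH : is_lambda_min (2%:R^-1 *: (A + A^T)) lH)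
  (hlBB : is_lambda_min (B *m B^T) lBB)
  (sgn : C) :
  let uu := (ctrmx u *m u) 0 0 in
  let q := (ctrmx u *m A *m u) 0 0 / uu in
  let a1 := 'Re q in
  let b1 := 'Im q in
  let c1 := (ctrmx u *m B *m B^T *m u) 0 0 / uu in
  let a2 := beta ^+ 2 * (a1 ^+ 2 - b1 ^+ 2) - 4%:R * alpha * beta * c1 in
  let b2 := 2%:R * beta ^+ 2 * a1 * b1 in
  (sgn = 1 \/ sgn = -1) -> (b1 != 0 -> sgn = Num.sg b1) ->
  let z1 := sqrtC ((sqrtC (a2 ^+ 2 + b2 ^+ 2) + a2) / 2%:R) in
  let z2 := sgn * sqrtC ((sqrtC (a2 ^+ 2 + b2 ^+ 2) - a2) / 2%:R) in
  let D := alpha * beta + 2%:R * beta * a1 + 4%:R * c1 + 2%:R * 'i * beta * b1 in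
  let lamp := 2%:R^-1 + ((z1 - alpha * beta - beta * a1) + 'i * (z2 - beta * b1)) / (2%:R * D) in
  let lamm := 2%:R^-1 - ((z1 + alpha * beta + beta * a1) + 'i * (z2 + beta * b1)) / (2%:R * D) in
  let X := ((alpha * beta + 2%:R * beta * a1) ^+ 2
            + (beta * `|b1| + sqrtC (beta ^+ 2 * b1 ^+ 2 + 4%:R * alpha * beta * c1)) ^+ 2)
           / (4%:R * ((alpha * beta + 2%:R * beta * a1 + 4%:R * c1) ^+ 2
                      + 4%:R * beta ^+ 2 * b1 ^+ 2)) in
  let Y := ((alpha * beta + 2%:R * beta * rH) ^+ 2
            + (beta * rS + sqrtC (beta ^+ 2 * rS ^+ 2 + 4%:R * alpha * beta * rBB)) ^+ 2)
           / (4%:R * (alpha * beta + 2%:R * beta * lH + 4%:R * lBB) ^+ 2) in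
  (lam = lamp \/ lam = lamm) /\
  `|lamp - 2%:R^-1| ^+ 2 <= X /\ `|lamm - 2%:R^-1| ^+ 2 <= X /\ X <= Y.
Proof.
move=> uu q a1 b1 c1 a2 b2 hsgn hsgnb z1 z2 D lamp lamm X Y.
have hAr : A \is a mxOver Num.real by case: hA.
have hu : u != 0 by apply: contraNneq hBu => ->; rewrite mulmx0.
have huu : 0 < uu := cdot_gt0 hu.
have uur : uu \is Num.real := gtr0_real huu.
have uuVr : uu^-1 \is Num.real by rewrite rpredV.
pose qA := (ctrmx u *m A *m u) 0 0.
have a1E : a1 = 'Re qA / uu by rewrite /a1 /q ReMr.
have b1E : b1 = 'Im qA / uu by rewrite /b1 /q ImMr.
have ha1 : 0 < a1 by rewrite a1E divr_gt0 // posRe.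
have b1r : b1 \is Num.real by rewrite /b1 Creal_Im.
pose r := B^T *m u.
have ccE : (ctrmx u *m B *m B^T *m u) 0 0 = (ctrmx r *m r) 0 0.
  by rewrite ctrmx_mul (ctrmx_real (trmx_real hB)) trmxK !mulmxA.
have hc1 : 0 < c1 by rewrite /c1 ccE divr_gt0 // cdot_gt0.
have hq : q = a1 + 'i * b1 by rewrite /a1 /b1 -Crect.
have Quad := eig_quad _ _ _ _ _ _ _ _ _ (P_unit _ _ _ _ _ _ hA hB halpha hbeta) heig.
move: Quad; rewrite -/uu -/qA => Quad.
have Quad' : beta * (alpha + 2%:R * (a1 + 'i * b1)) * lam ^+ 2 - beta * (a1 + 'i * b1) * lam
    + (2%:R * lam - 1) ^+ 2 * c1 = 0.
  have huu0 : uu != 0 by rewrite gt_eqF.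
  rewrite -hq (_ : _ + _ = (beta * (alpha * uu + 2%:R * qA) * lam ^+ 2 - beta * qA * lam
      + (2%:R * lam - 1) ^+ 2 * (ctrmx u *m B *m B^T *m u) 0 0) / uu).
    by rewrite Quad mul0r.
  by rewrite /q /c1 -/qA; field.
have [H1 [H2 H3]] := alg_part _ _ _ _ _ _ _ halpha hbeta ha1 b1r hc1 hsgn hsgnb Quad'.
split; first exact: H1.
split; first exact: H2.
split; first exact: H3.
have normH : (2%:R^-1 *: (A + A^T)) \is normalmx.
  by apply: (normal_of_ct _ _ 1); rewrite ?expr1n // ctH // scale1r.
have normS : (2%:R^-1 *: (A - A^T)) \is normalmx.
  by apply: (normal_of_ct _ _ (-1)); rewrite ?sqrrN ?expr1n // ctS.
have normBB : (B *m B^T) \is normalmx.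
  by apply: (normal_of_ct _ _ 1); rewrite ?expr1n // ctBB // scale1r.
have [hlH0 hla hau] : [/\ 0 < lH, lH <= a1 & a1 <= rH].
  have [w [d [e1 e2 e3 e4]]] := rayleigh _ _ u normH.
  move: e2; rewrite -/uu => e2.
  have hd := e4 (herm_of_ct _ _ (ctH _ _ hAr)).
  have hHq : 'Re qA = \sum_i `|w i 0| ^+ 2 * d 0 i by rewrite /qA ReH.
  split.
  - have [c [cn0 hc]] := eig_rq _ _ _ hlH.1.
    have := posRe hA cn0; rewrite ReH // hc pmulr_lgt0 //; exact: cdot_gt0.
  - rewrite a1E ler_pdivlMr // hHq e2 mulr_sumr; apply: ler_sum => i _.
    rewrite mulrC; apply: ler_wpM2l; first exact: exprn_ge0.
    exact: hlH.2 _ (e3 i).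
  - rewrite a1E ler_pdivrMr // hHq e2 mulr_sumr; apply: ler_sum => i _.
    rewrite [rH * _]mulrC; apply: ler_wpM2l; first exact: exprn_ge0.
    exact: le_trans (real_ler_norm (hd i)) (hrH.2 _ (e3 i)).
have hbs : `|b1| <= rS.
  have [w [d [e1 e2 e3 _]]] := rayleigh _ _ u normS.
  move: e2; rewrite -/uu => e2.
  rewrite b1E normf_div (gtr0_norm huu) ler_pdivrMr // e2 mulr_sumr.
  rewrite -[`|'Im qA|]mul1r -normCi -normrM /qA ImS // e1.
  apply: le_trans (ler_norm_sum _ _ _) _; apply: ler_sum => i _.
  rewrite normrM ger0_norm ?exprn_ge0 // [rS * _]mulrC.
  apply: ler_wpM2l; first exact: exprn_ge0.
  exact: hrS.2 _ (e3 i).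
have [hlB0 hlc hcu] : [/\ 0 <= lBB, lBB <= c1 & c1 <= rBB].
  have [w [d [e1 e2 e3 e4]]] := rayleigh _ _ u normBB.
  move: e2; rewrite -/uu => e2.
  have hd := e4 (herm_of_ct _ _ (ctBB _ _ _ hB)).
  have hcc : (ctrmx u *m B *m B^T *m u) 0 0 = \sum_i `|w i 0| ^+ 2 * d 0 i.
    by rewrite -[ctrmx u *m B *m B^T]mulmxA e1.
  split.
  - have [c [cn0 hc]] := eig_rq _ _ _ hlBB.1.
    have := cdot_ge0 (B^T *m c).
    rewrite ctrmx_mul (ctrmx_real (trmx_real hB)) trmxK !mulmxA.
    rewrite -[ctrmx c *m B *m B^T]mulmxA hc pmulr_lge0 //; exact: cdot_gt0.
  - rewrite /c1 ler_pdivlMr // hcc e2 mulr_sumr; apply: ler_sum => i _.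
    rewrite mulrC; apply: ler_wpM2l; first exact: exprn_ge0.
    exact: hlBB.2 _ (e3 i).
  - rewrite /c1 ler_pdivrMr // hcc e2 mulr_sumr; apply: ler_sum => i _.
    rewrite [rBB * _]mulrC; apply: ler_wpM2l; first exact: exprn_ge0.
    exact: le_trans (real_ler_norm (hd i)) (hrBB.2 _ (e3 i)).
exact: (XY _ _ _ _ _ rH rS rBB lH lBB halpha hbeta b1r hlH0 hla hau hbs hlB0 hlc hcu).
Qed.
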